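(* Consider the input-output system $\dot{\mathbf x}=\mathbf f(\mathbf x)+\hat{\mathbf e}_1 g(u,x_1)$, $u\in J$, with output $x_j$ for some fixed $j$, satisfying assumption (A0). Let $\mathcal J$ be the signed symbolic matrix consistent with $\frac{\partial\mathbf f}{\partial\mathbf x}$. If the polynomial $\mathcal J[\hat 1,\hat j]$ is not identically zero and does not have mixed signs, then the system is not quasi-adaptive and does not exhibit biphasic response.
   Context: $\mathcal X\subset\mathbb R^n$, $J\subset\mathbb R$ an interval, $\mathbf f:\mathcal X\to\mathbb R^n$ is $C^1$, every entry $\partial f_i/\partial x_k$ has constant sign (positive, negative, or identically zero) on $\mathcal X$, and $\partial f_i/\partial x_i<0$. $\hat{\mathbf e}_1$ is the first standard basis vector. The control term $g$ is one of: flow, $g(u,x_1)=u$; activation, $g(u,x_1)=(u+k_{\mathrm{on}})(x_T-x_1)-k_{\mathrm{off}}x_1$; inhibition, $g(u,x_1)=k_{\mathrm{on}}(x_T-x_1)-(u+k_{\mathrm{off}})x_1$, with constants $x_T,k_{\mathrm{on}},k_{\mathrm{off}}>0$; in the activation and inhibition cases the state space satisfies $0\le x_1\le x_T$ and every steady state has $0<x_1<x_T$. Write $\mathbf F(\mathbf x,u)=\mathbf f(\mathbf x)+\hat{\mathbf e}_1g(u,x_1)$. Assumption (A0): for every $u_0\in J$ there is $\mathbf x_0\in\mathcal X$ with $\mathbf F(\mathbf x_0,u_0)=\mathbf 0$ and $\frac{\partial\mathbf F}{\partial\mathbf x}(\mathbf x_0,u_0)$ of full rank; by the implicit function theorem this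 gives continuously differentiable steady-state curves $\mathbf x^*(u)$. The system is quasi-adaptive if, along such a steady-state curve, $\partial_u x_j^*(u_0)=0$ for some $u_0\in J$; it exhibits biphasic response if $\partial_u x_j^*(u_1)\,\partial_u x_j^*(u_2)<0$ for some $u_1,u_2\in J$. The signed symbolic matrix consistent with $\frac{\partial\mathbf f}{\partial\mathbf x}$ is the matrix $\mathcal J$ whose $(i,k)$ entry is $a_{ik}$, $-a_{ik}$ or $0$ (with $a_{ik}$ distinct variables) according as $\partial f_i/\partial x_k$ is positive, negative, or zero. $\mathcal J[\hat 1,\hat j]$ is the minor with row $1$ and column $j$ deleted. A polynomial has mixed signs if, after cancellations, it has monomials with both positive and negative coefficients. *)

(* Defs.v *)
From HB Require Import structures.
From mathcomp Require Import all_boot all_order all_algebra.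
From mathcomp Require Import mpoly.
From mathcomp Require Import all_classical all_reals all_analysis.
Set Implicit Arguments. Unset Strict Implicit. Unset Printing Implicit Defensive.
Import Order.TTheory GRing.Theory Num.Theory.
Import numFieldNormedType.Exports.
Local Open Scope classical_set_scope.
Local Open Scope ring_scope.

Inductive sgn := SPos | SNeg | SZero.

Definition has_sgn {R : realDomainType} (s : sgn) (r : R) : Prop :=
  match s with SPos => 0 < r | SNeg => r < 0 | SZero => r = 0 end.

(** Jacobian matrix of h at x : (i,k) entry = partial derivative of h_i
    with respect to x_k.  Vectors of R^m are row vectors 'rV[R]_m. *)
Definition jac {R : realType} {m : nat} (h : 'rV[R]_m -> 'rV[R]_m)
  (x : 'rV[R]_m) : 'M[R]_m :=
  \matrix_(i < m, k < m) ('D_(delta_mx 0 k) h x) 0 i.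

Inductive ctrl (R : realType) :=
  | Flow
  | Activation (xT kon koff : R)
  | Inhibition (xT kon koff : R).

Definition gctrl {R : realType} (c : ctrl R) (u x1 : R) : R :=
  match c with
  | Flow => u
  | Activation xT kon koff => (u + kon) * (xT - x1) - koff * x1
  | Inhibition xT kon koff => kon * (xT - x1) - (u + koff) * x1
  end.

(** F(x,u) = f(x) + e_1 g(u, x_1)   (index 0 is the first coordinate). *)
Definition Fsys {R : realType} {n : nat} (f : 'rV[R]_n.+1 -> 'rV[R]_n.+1)
  (c : ctrl R) (x : 'rV[R]_n.+1) (u : R) : 'rV[R]_n.+1 :=
  f x + gctrl c u (x 0 0) *: delta_mx 0 0.

Definition ctrl_ok {R : realType} {n : nat} (f : 'rV[R]_n.+1 -> 'rV[R]_n.+1)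
  (c : ctrl R) (X : set 'rV[R]_n.+1) (J : interval R) : Prop :=
  match c with
  | Flow => True
  | Activation xT kon koff | Inhibition xT kon koff =>
      [/\ 0 < xT, 0 < kon, 0 < koff,
          (forall x, X x -> 0 <= x 0 0 <= xT) &
          (forall x u, X x -> u \in J -> Fsys f c x u = 0 -> 0 < x 0 0 < xT)]
  end.

Definition A0 {R : realType} {n : nat} (f : 'rV[R]_n.+1 -> 'rV[R]_n.+1)
  (c : ctrl R) (X : set 'rV[R]_n.+1) (J : interval R) : Prop :=
  forall u0, u0 \in J -> exists x0, [/\ X x0, Fsys f c x0 u0 = 0 &
    \rank (jac (fun x => Fsys f c x u0) x0) = n.+1].

Definition steady_curve {R : realType} {n : nat} (f : 'rV[R]_n.+1 -> 'rV[R]_n.+1)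
  (c : ctrl R) (X : set 'rV[R]_n.+1) (J : interval R) (xs : R -> 'rV[R]_n.+1)
  : Prop :=
  [/\ forall u, u \in J -> X (xs u),
      forall u, u \in J -> Fsys f c (xs u) u = 0,
      forall u, u \in J -> derivable xs u 1 &
      {in J, forall u, {for u, continuous (fun v => 'D_1 xs v)}}].

Definition quasi_adaptive {R : realType} {n : nat} (J : interval R)
  (xs : R -> 'rV[R]_n.+1) (j : 'I_n.+1) : Prop :=
  exists2 u0, u0 \in J & ('D_1 xs u0) 0 j = 0.

Definition biphasic {R : realType} {n : nat} (J : interval R)
  (xs : R -> 'rV[R]_n.+1) (j : 'I_n.+1) : Prop :=
  exists u1 u2, [/\ u1 \in J, u2 \in J & ('D_1 xs u1) 0 j * ('D_1 xs u2) 0 j < 0].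

(** Signed symbolic matrix: entry (i,k) is a_{ik}, -a_{ik} or 0, where the
    a_{ik} are distinct variables of the polynomial ring Z[a_{ik}],
    a_{ik} being variable number mxvec_index i k. *)
Definition symJ (m : nat) (s : 'I_m -> 'I_m -> sgn)
  : 'M[mpoly.mpoly (m * m) int]_m :=
  \matrix_(i < m, k < m)
    match s i k with
    | SPos => mpoly.mpolyX int (mpoly.mnm1 (mxvec_index i k))
    | SNeg => - mpoly.mpolyX int (mpoly.mnm1 (mxvec_index i k))
    | SZero => 0
    end.

Definition minor1j (n : nat) (s : 'I_n.+1 -> 'I_n.+1 -> sgn) (j : 'I_n.+1)
  : mpoly.mpoly (n.+1 * n.+1) int :=
  \det (row' 0 (col' j (symJ s))).

(** Mixed signs: after cancellation (i.e. in the normal form of the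
    polynomial) there are monomials with positive and negative coefficients. *)
Definition mixed_signs (N : nat) (p : mpoly.mpoly N int) : Prop :=
  exists m1 m2, [/\ m1 \in mpoly.msupp p, m2 \in mpoly.msupp p,
     0 < mpoly.mcoeff m1 p & mpoly.mcoeff m2 p < 0].

(* Main.v *)
Require Import Defs.
From HB Require Import structures.
From mathcomp Require Import all_boot all_order all_algebra.
From mathcomp Require Import mpoly.
From mathcomp Require Import all_classical all_reals all_analysis.
From mathcomp Require Import ring lra.
Import Order.TTheory GRing.Theory Num.Theory.
Import numFieldNormedType.Exports.
Local Open Scope classical_set_scope.
Local Open Scope ring_scope.

Definition gb {R : realType} (c : ctrl R) (x1 : R) : R :=
  match c with
  | Flow => 1
  | Activation xT kon koff => xT - x1
  | Inhibition xT kon koff => - x1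
  end.
Definition ga {R : realType} (c : ctrl R) (u : R) : R :=
  match c with
  | Flow => 0
  | Activation xT kon koff => - (u + kon) - koff
  | Inhibition xT kon koff => - kon - (u + koff)
  end.

Lemma phi_derive (R : realType) (c : ctrl R) (x1 : R -> R) (u d : R) :
  is_derive u 1 x1 d ->
  is_derive u 1 (fun v => gctrl c v (x1 v)) (gb c (x1 u) + ga c u * d).
Proof.
move=> dx; case: c => [|xT kon koff|xT kon koff] /=.
- by apply: is_derive_eq; rewrite mul0r addr0.
- have -> : (fun v => (v + kon) * (xT - x1 v) - koff * x1 v) =
    ((@id R) + cst kon) * (cst xT - x1) - cst koff * x1.
    by apply/funext => v.
  apply: is_derive_eq; rewrite /= /GRing.scale /=; change ((u + kon) * (0 - d) + (xT - x1 u) * (1 + 0) - (koff * d + x1 u * 0) = xT - x1 u + (- (u + kon) - koff) * d); ring.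
- have -> : (fun v => kon * (xT - x1 v) - (v + koff) * x1 v) =
    cst kon * (cst xT - x1) - ((@id R) + cst koff) * x1.
    by apply/funext => v.
  apply: is_derive_eq; rewrite /= /GRing.scale /=; change (kon * (0 - d) + (xT - x1 u) * 0 - ((u + koff) * d + x1 u * (1 + 0)) = - x1 u + (- kon - (u + koff)) * d); ring.
Qed.

Lemma H_derive (R : realType) (n : nat) (f : 'rV[R]_n.+1 -> 'rV[R]_n.+1)
  (c : ctrl R) (xs : R -> 'rV[R]_n.+1) (u : R) :
  derivable xs u 1 -> differentiable f (xs u) ->
  derivable (fun v => Fsys f c (xs v) v) u 1 /\
  'D_1 (fun v => Fsys f c (xs v) v) u =
    'D_1 xs u *m jacobian f (xs u) +
    (gb c (xs u 0 0) + ga c u * ('D_1 xs u) 0 0) *: delta_mx 0 0.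
Proof.
move=> dxs df.
have dx1 : is_derive u 1 (fun v => xs v 0 0) (('D_1 xs u) 0 0).
  apply: DeriveDef; first exact: ((derivable_mxP xs u 1).1 dxs 0 0).
  by rewrite (derive_mx dxs) mxE.
have dphi := @phi_derive R c _ _ _ dx1.
have xsd : differentiable xs u by apply/derivable1_diffP.
have phid : differentiable (fun v => gctrl c v (xs v 0 0)) u.
  by apply/derivable1_diffP; case: dphi.
have fxd : differentiable (f \o xs) u by apply: differentiable_comp.
have gd : differentiable (fun v => gctrl c v (xs v 0 0) *: (delta_mx 0 0 : 'rV[R]_n.+1)) u.
  exact: differentiableZl.
have -> : (fun v => Fsys f c (xs v) v) =
   (f \o xs) + (fun v => gctrl c v (xs v 0 0) *: (delta_mx 0 0 : 'rV[R]_n.+1)).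
  by apply/funext => v.
split; first by apply: derivableD; apply: diff_derivable.
rewrite deriveD; try by apply: diff_derivable.
congr (_ + _).
  rewrite deriveE // diff_comp // /= -deriveE // -deriveE //.
  exact: deriveEjacobian.
rewrite deriveE // diffZl // -deriveE //.
by case: dphi => _ ->.
Qed.
Lemma sum_seq_gt0 (R : realDomainType) (T : eqType) (r : seq T) (G : T -> R) :
  r != [::] -> (forall m, m \in r -> 0 < G m) -> 0 < \sum_(m <- r) G m.
Proof.
case: r => [//|m0 r] _ H.
rewrite big_cons; apply: (@lt_le_trans _ _ (G m0 + 0)).
  by rewrite addr0; apply: H; rewrite mem_head.
rewrite lerD2l big_seq sumr_ge0 // => i ir.
by apply/ltW/H; rewrite in_cons ir orbT.
Qed.

Lemma minor_neq0 (R : realType) (n : nat) (s : 'I_n.+1 -> 'I_n.+1 -> sgn)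
  (j : 'I_n.+1) (M : 'M[R]_n.+1) :
  (forall i k, has_sgn (s i k) (M i k)) ->
  minor1j s j != 0 -> ~ mixed_signs (minor1j s j) ->
  \det (row' 0 (col' j M)) != 0.
Proof.
move=> hs nz nmix.
pose h : 'I_(n.+1 * n.+1) -> R :=
  fun l => if mxvec M 0 l == 0 then 1 else `|mxvec M 0 l|.
have hpos : forall l, 0 < h l.
  by move=> l; rewrite /h; case: eqP => [_|/eqP]; rewrite ?ltr01 ?normr_gt0.
pose phi := mmap (intr : int -> R) h.
have eM : map_mx phi (symJ s) = M.
  apply/matrixP => i k; rewrite !mxE.
  have := hs i k; case: (s i k) => /= Hs.
  - rewrite /phi mmapX mmap1U /h mxvecE gt_eqF // gtr0_norm //.
  - rewrite /phi mmapN mmapX mmap1U /h mxvecE lt_eqF // ltr0_norm // opprK //.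
  - by rewrite /phi mmap0 Hs.
have -> : M = map_mx phi (symJ s) by [].
rewrite -map_col' -map_row' det_map_mx -/(minor1j s j).
set p := minor1j s j.
rewrite /phi /mmap.
have hm : forall m, 0 < mmap1 h m.
  by move=> m; rewrite /mmap1 prodr_gt0 // => i _; rewrite exprn_gt0.
have ne : msupp p != [::] by rewrite msupp_eq0.
have [m0 m0in] : exists m0, m0 \in msupp p.
  by case: (msupp p) ne => [//|m r] _; exists m; rewrite mem_head.
have c0 : p@_m0 != 0 by rewrite -mcoeff_msupp.
case: (ltrgt0P (p@_m0)) c0 => // [cpos|cneg] _.
- apply/lt0r_neq0/sum_seq_gt0 => // m min.
  apply: mulr_gt0 => //; rewrite ltr0z.
  have cm : p@_m != 0 by rewrite -mcoeff_msupp.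
  case: (ltrgt0P (p@_m)) cm => // cm _.
  by exfalso; apply: nmix; exists m0, m.
- rewrite -oppr_eq0 -sumrN; apply/lt0r_neq0/sum_seq_gt0 => // m min.
  rewrite -mulNr; apply: mulr_gt0 => //; rewrite oppr_gt0 ltrz0.
  have cm : p@_m != 0 by rewrite -mcoeff_msupp.
  case: (ltrgt0P (p@_m)) cm => // cm _.
  by exfalso; apply: nmix; exists m, m0.
Qed.
Lemma cramer_nz (R : fieldType) (n : nat) (Jt : 'M[R]_n.+1) (a b : R)
  (d : 'rV[R]_n.+1) (j : 'I_n.+1) :
  d *m Jt + (b + a * d 0 0) *: delta_mx 0 0 = 0 ->
  b != 0 -> \det (row' 0 (col' j Jt^T)) != 0 -> d 0 j != 0.
Proof.
move=> eq bnz mnz.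
pose A : 'M[R]_n.+1 := Jt^T + a *: delta_mx 0 0.
have eA : A *m d^T = - b *: (delta_mx 0 0 : 'cV[R]_n.+1).
  apply/matrixP => i z; rewrite (ord1 z) {z}.
  have := congr1 (fun M : 'rV[R]_n.+1 => M 0 i) eq => /=.
  rewrite !mxE => e. idtac.
  under eq_bigr => k _ do rewrite /A !mxE mulrDl.
  rewrite big_split /= [X in _ + X](bigD1 0) //= [X in _ + (_ + X)]big1; last first.
    by move=> k /negbTE kn; rewrite kn andbF mulr0 mul0r.
  rewrite eqxx !andbT addr0.
  have eS : \sum_k Jt k i * d 0 k = \sum_k d 0 k * Jt k i.
    by apply: eq_bigr => k _; rewrite mulrC.
  rewrite eS eqxx /= in e *.
  case: (i =P 0) => [->|_] /= in e *.
    rewrite !mulr1 in e *.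
    set S := \sum_(k < n.+1) _ in e *; apply: (addIr b); rewrite addNr -e -addrA (addrC (a * _)) //.
  by rewrite !mulr0 mul0r addr0 in e *.
have key : \det A * d 0 j = - b * ((-1) ^+ j * \det (row' 0 (col' j Jt^T))).
  have := congr1 (fun M => (\adj A *m M) j 0) eA.
  rewrite mulmxA mul_adj_mx mul_scalar_mx -scalemxAr !mxE /=.
  rewrite (bigD1 0) //= big1; last first.
    by move=> k /negbTE kn; rewrite !mxE kn mulr0.
  rewrite [(\adj A) j 0]mxE !mxE eqxx /= mulr1 addr0 /cofactor add0n => ->.
  congr (_ * (_ * \det _)).
  apply/matrixP => i k; rewrite !mxE.
  by rewrite eq_sym (negbTE (neq_lift 0 i)) /= mulr0 addr0.
apply/negP => /eqP d0; move: key; rewrite d0 mulr0 => /esym/eqP.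
rewrite mulf_eq0 oppr_eq0 (negbTE bnz) /= mulf_eq0 (negbTE mnz) orbF.
by rewrite expf_eq0 oppr_eq0 oner_eq0 andbF.
Qed.
Lemma derive_zero_on (R : realType) (V : normedModType R) (h : R -> V)
  (J : interval R) (u : R) :
  derivable h u 1 -> (exists a b, [/\ a \in J, b \in J & a < b]) -> u \in J ->
  (forall v, v \in J -> h v = 0) -> 'D_1 h u = 0.
Proof.
move=> dh [a [b [aJ bJ ab]]] uJ h0.
have iJ := @interval_is_interval R J.
rewrite /derive.
set g := (fun t : R => _).
have gt0 : forall t, u + t \in J -> g t = 0.
  move=> t tJ; rewrite /g /= /shift (h0 u uJ) h0; first by rewrite subr0 scaler0.
  by rewrite /GRing.scale /= mulr1 addrC.
have [ub|bu] := ltP u b.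
- rewrite (cvg_at_rightE g) //; apply: cvg_lim => //.
  apply: cvg_near_cst; near=> t.
  apply: gt0; apply: (iJ u b) => //.
  apply/andP; split; first by rewrite lerDl; near: t; exact: nbhs_right_ge.
  rewrite -lerBrDl; near: t; apply: nbhs_right_le; by rewrite subr_gt0.
- have au : a < u by apply: lt_le_trans bu.
  rewrite (cvg_at_leftE g) //; apply: cvg_lim => //.
  apply: cvg_near_cst; near=> t.
  apply: gt0; apply: (iJ a u) => //.
  apply/andP; split; last by rewrite gerDl; near: t; exact: nbhs_left_le.
  rewrite -lerBlDl; near: t; apply: nbhs_left_ge; by rewrite subr_lt0.
Unshelve. all: by end_near.
Qed.

Lemma jac_jacobian (R : realType) (n : nat) (f : 'rV[R]_n.+1 -> 'rV[R]_n.+1) x :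
  differentiable f x -> jac f x = (jacobian f x)^T.
Proof.
move=> df; apply/matrixP => i k.
by rewrite !mxE deriveE.
Qed.

Theorem lemma9 (R : realType) (n : nat) (X : set 'rV[R]_n.+1) (J : interval R)
  (f : 'rV[R]_n.+1 -> 'rV[R]_n.+1) (s : 'I_n.+1 -> 'I_n.+1 -> sgn)
  (c : ctrl R) (j : 'I_n.+1) :
  (exists a b, [/\ a \in J, b \in J & a < b]) ->
  (forall x, X x -> differentiable f x) ->
  {within X, continuous (jac f)} ->
  (forall x, X x -> forall i k, has_sgn (s i k) (jac f x i k)) ->
  (forall i, s i i = SNeg) ->
  ctrl_ok f c X J ->
  A0 f c X J ->
  minor1j s j != 0 ->
  ~ mixed_signs (minor1j s j) ->
  forall xs : R -> 'rV[R]_n.+1, steady_curve f c X J xs ->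
    ~ quasi_adaptive J xs j /\ ~ biphasic J xs j.
Proof.
move=> Jne fd _ hs _ cok _ mnz nmix xs [xsX xs0 xsd xsc].
have dnz : forall u, u \in J -> ('D_1 xs u) 0 j != 0.
  move=> u uJ.
  have [Hd HD] := @H_derive R n f c xs u (xsd u uJ) (fd _ (xsX u uJ)).
  have H0 := @derive_zero_on _ _ _ J u Hd Jne uJ xs0.
  rewrite HD in H0.
  apply: (@cramer_nz _ _ _ _ _ _ _ H0).
    move: (xs0 u uJ) cok; clear Hd HD H0 xs0.
    case: c => [|xT kon koff|xT kon koff] /= e0.
    - by move=> _; rewrite oner_eq0.
    - case=> _ _ _ _ /(_ _ u (xsX u uJ) uJ e0) /andP[_ lt].
      by rewrite subr_eq0 gt_eqF.
    - case=> _ _ _ _ /(_ _ u (xsX u uJ) uJ e0) /andP[gt _].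
      by rewrite oppr_eq0 gt_eqF.
  rewrite -jac_jacobian; last exact: fd _ (xsX u uJ).
  exact: (@minor_neq0 _ _ s j _ (hs _ (xsX u uJ)) mnz nmix).
split.
  by case=> u uJ /eqP; apply/negP/dnz.
pose g v := ('D_1 xs v) 0 j.
have key : forall a b, a \in J -> b \in J -> a <= b -> g a * g b < 0 -> False.
  move=> a b aJ bJ ab gab.
  have iJ := @interval_is_interval R J.
  have sub : forall v, v \in `[a, b]%R -> v \in J.
    move=> v vab; have vab2 : a <= v <= b by rewrite (itvP vab) (itvP vab).
    exact: (iJ a b aJ bJ v vab2).
  have gc : {within `[a, b], continuous g}.
    apply: continuous_in_subspaceT => v /[1!inE] vab.
    have vJ : v \in J by apply: sub; exact: vab.
    exact: (continuous_comp (xsc v vJ) (@coord_continuous R 1 n.+1 0 j _)).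
  have [|z zab gz] := @IVT R g a b 0 ab gc.
    case: (ltrgt0P (g a)) gab => [ga0|ga0|->]; last by rewrite mul0r ltxx.
    - rewrite pmulr_rlt0 // => gb0.
      by rewrite ge_min le_max (ltW gb0) (ltW ga0) orbT.
    - rewrite nmulr_rlt0 // => gb0.
      by rewrite ge_min le_max (ltW gb0) (ltW ga0) orbT.
  by move: (dnz z (sub z zab)); rewrite -/(g z) gz eqxx.
case=> u1 [u2 [u1J u2J prod]].
have [le|lt] := leP u1 u2.
  exact: (key u1 u2).
by apply: (key u2 u1) => //; [exact: ltW | rewrite mulrC].
Qed.
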